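(* Let $\mathbf{a}$ be a non-periodic CSCA and $j\in\{1,2,3\}$. Let $\xi\in\mathcal{P}^2$ be non-zero. Then there is at most one time $t\ge0$ such that $\mathbf{a}^t\xi$ is of ''type $j$'', where type $1$ means $\mathbf{a}^t\xi=(p,0)$, type $3$ means $\mathbf{a}^t\xi=(0,p)$, and type $2$ means $\mathbf{a}^t\xi=(p,p)$ for some non-zero $p\in\mathcal{P}$. Equivalently: in the history $T^t(W(\xi))$, $t\ge 0$, of a non-periodic CQCA $T$, a finite tensor product consisting only of $\sigma_j$'s and identities occurs at most once.
   Context: $\mathcal{P}$ = Laurent polynomials in $u$ over $\mathbb{Z}_2$, $\mathcal{R}$ its palindromes. A CSCA is a $2\times2$ matrix over $\mathcal{R}$ of determinant $1$; it is periodic if some positive power is the identity. A vector $\xi=(\xi_+,\xi_-)\in\mathcal{P}^2$ labels the Pauli product $W(\xi)=\bigotimes_xW(\xi_+(x),\xi_-(x))$ with $W(1,0)=\sigma_1$, $W(0,1)=\sigma_3$, $W(1,1)\propto\sigma_2$, $W(0,0)=\mathbb{1}$; a CQCA $T$ acts as $T(W(\xi))\propto W(\mathbf{a}\xi)$. *)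

(* Defs.v *)
From HB Require Import structures.
From mathcomp Require Import all_boot all_order all_algebra.
From mathcomp Require Import finmap.
Set Implicit Arguments. Unset Strict Implicit. Unset Printing Implicit Defensive.
Import GRing.Theory Num.Theory.
Local Open Scope fset_scope.
Local Open Scope ring_scope.

(* Since coefficients lie in
   Z_2 = {0,1}, a Laurent polynomial p = \sum_n p_n u^n is the same thing as
   its (finite) support {n : int | p_n = 1}.  We represent it that way:
   n \in p  <=>  the coefficient of u^n in p is 1. *)
Definition laurent := {fset int}.

Definition lzero : laurent := fset0.
Definition lone : laurent := [fset (0:int)].
(* coefficientwise addition mod 2 = symmetric difference of supports *)
Definition ladd (p q : laurent) : laurent := (p `\` q) `|` (q `\` p).
(* product: coefficient of u^n is  \sum_k p_k q_(n-k)  mod 2, i.e. the parity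
   of #{k in supp p | n - k in supp q} *)
Definition lmul (p q : laurent) : laurent :=
  [fset n in [fset i + j | i in p, j in q]
     | odd #|` [fset k in p | (n - k) \in q]| ].
(* p(u^{-1}) *)
Definition linv_var (p : laurent) : laurent := [fset - n | n in p].
Definition palindromic (p : laurent) : Prop := linv_var p = p.

Definition lvec := (laurent * laurent)%type.
Definition vzero : lvec := (lzero, lzero).

Record lmat := LMat { m11 : laurent; m12 : laurent; m21 : laurent; m22 : laurent }.
Definition mone : lmat := LMat lone lzero lzero lone.
Definition mmul (a b : lmat) : lmat :=
  LMat (ladd (lmul (m11 a) (m11 b)) (lmul (m12 a) (m21 b)))
       (ladd (lmul (m11 a) (m12 b)) (lmul (m12 a) (m22 b)))
       (ladd (lmul (m21 a) (m11 b)) (lmul (m22 a) (m21 b)))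
       (ladd (lmul (m21 a) (m12 b)) (lmul (m22 a) (m22 b))).
Definition mpow (a : lmat) (t : nat) : lmat := iter t (mmul a) mone.
(* determinant (in characteristic 2, minus = plus) *)
Definition mdet (a : lmat) : laurent :=
  ladd (lmul (m11 a) (m22 a)) (lmul (m12 a) (m21 a)).
Definition mapply (a : lmat) (xi : lvec) : lvec :=
  (ladd (lmul (m11 a) xi.1) (lmul (m12 a) xi.2),
   ladd (lmul (m21 a) xi.1) (lmul (m22 a) xi.2)).

Definition CSCA (a : lmat) : Prop :=
  [/\ palindromic (m11 a), palindromic (m12 a), palindromic (m21 a),
      palindromic (m22 a) & mdet a = lone].
Definition periodic (a : lmat) : Prop := exists n : nat, (0 < n)%N /\ mpow a n = mone.

Definition of_type (j : nat) (v : lvec) : Prop :=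
  exists2 p : laurent, p <> lzero &
    match j with
    | 1%N => v = (p, lzero)
    | 2%N => v = (p, p)
    | 3%N => v = (lzero, p)
    | _ => False
    end.

(* Main.v *)
Set Warnings "-notation-overridden,-ambiguous-paths,-notation-incompatible-prefix".
Require Import Defs.
From HB Require Import structures.
From mathcomp Require Import all_boot all_order all_algebra.
From mathcomp Require Import finmap zify.
Set Implicit Arguments. Unset Strict Implicit. Unset Printing Implicit Defensive.
Import GRing.Theory Num.Theory.
Local Open Scope fset_scope.
Local Open Scope ring_scope.

Definition cf (p : laurent) (n : int) : 'F_2 := (n \in p)%:R.

Lemma F2_nat (m : nat) : (m%:R : 'F_2) = (odd m)%:R.
Proof.
elim: m => // m IH; rewrite -[m.+1]addn1 natrD IH oddD /=.
by case: (odd m) => /=; apply/eqP.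
Qed.

Lemma cf_inj p q : (forall n, cf p n = cf q n) -> p = q.
Proof.
move=> H; apply/fsetP => n; have := H n; rewrite /cf.
by case: (n \in p); case: (n \in q) => // /eqP.
Qed.

Lemma cf_add p q n : cf (ladd p q) n = cf p n + cf q n.
Proof. rewrite /cf /ladd !inE. by case: (n \in p); case: (n \in q) => /=; apply/eqP. Qed.

Lemma cf0 n : cf lzero n = 0.
Proof. by rewrite /cf inE. Qed.

Lemma cf1 n : cf lone n = (n == 0)%:R.
Proof. by rewrite /cf /lone inE. Qed.

Lemma cf_mul p q n : cf (lmul p q) n = \sum_(i <- p) cf q (n - i).
Proof.
have Hc : #|` [fset k in p | n - k \in q]| = count (fun k => n - k \in q) p.
  by rewrite card_fset_sum1 -big_fset_condE sum1_count.
have Hs : \sum_(i <- p) cf q (n - i) = (count (fun k => n - k \in q) p)%:R.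
  rewrite -sum1_count natr_sum [RHS]big_mkcond /=; apply: eq_bigr => i _.
  by rewrite /cf; case: ifP.
rewrite Hs F2_nat /cf /lmul !inE -Hc.
case E: (odd _); rewrite ?andbF ?andbT //.
have : has (fun k => n - k \in q) p by rewrite has_count -Hc; case: #|` _| E.
case/hasP => k kp kq.
have : k + (n - k) \in [fset i + j | i in p, j in q] by apply: in_imfset2.
by rewrite addrC subrK => ->.
Qed.

Lemma sum_pred1 (q : laurent) (a : int) :
  \sum_(j <- q) (j == a)%:R = cf q a.
Proof.
have -> : \sum_(j <- q) (j == a)%:R = (count (pred1 a) q)%:R :> 'F_2.
  rewrite -sum1_count natr_sum [RHS]big_mkcond /=; apply: eq_bigr => j _.
  by case: ifP.
by rewrite count_uniq_mem ?fset_uniq.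
Qed.

Lemma cf_mul2 p q n :
  cf (lmul p q) n = \sum_(i <- p) \sum_(j <- q) (i + j == n)%:R.
Proof.
rewrite cf_mul; apply: eq_bigr => i _; rewrite -sum_pred1.
apply: eq_bigr => j _.
by rewrite [j == _]eq_sym subr_eq [j + i]addrC eq_sym.
Qed.

Lemma lmulC p q : lmul p q = lmul q p.
Proof.
apply: cf_inj => n; rewrite !cf_mul2 exchange_big /=.
by apply: eq_bigr => i _; apply: eq_bigr => j _; rewrite addrC.
Qed.

Lemma lmulA p q r : lmul p (lmul q r) = lmul (lmul p q) r.
Proof.
apply: cf_inj => n; rewrite [lmul (lmul p q) r]lmulC !cf_mul.
under eq_bigr do rewrite cf_mul2.
under [RHS]eq_bigr do rewrite cf_mul2.
rewrite [RHS]exchange_big /=; apply: eq_bigr => i _.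
rewrite [RHS]exchange_big /=; apply: eq_bigr => j _.
apply: eq_bigr => l _.
rewrite (_ : (j + l == n - i) = (i + j == n - l)) //.
by apply/idP/idP => /eqP H; apply/eqP; lia.
Qed.

Lemma lmulDr p q r : lmul p (ladd q r) = ladd (lmul p q) (lmul p r).
Proof.
apply: cf_inj => n; rewrite cf_add !cf_mul -big_split /=.
by apply: eq_bigr => i _; rewrite cf_add.
Qed.

Lemma lmul1 p : lmul lone p = p.
Proof.
apply: cf_inj => n; rewrite cf_mul /lone big_seq_fset1 subr0 //.
Qed.

Lemma lmul0 p : lmul lzero p = lzero.
Proof. by apply: cf_inj => n; rewrite cf_mul /lzero big_seq_fset0. Qed.

Lemma laddC p q : ladd p q = ladd q p.
Proof. by apply: cf_inj => n; rewrite !cf_add addrC. Qed.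
Lemma laddA p q r : ladd p (ladd q r) = ladd (ladd p q) r.
Proof. by apply: cf_inj => n; rewrite !cf_add addrA. Qed.
Lemma ladd0 p : ladd lzero p = p.
Proof. by apply: cf_inj => n; rewrite !cf_add cf0 add0r. Qed.
Lemma laddxx p : ladd p p = lzero.
Proof. apply: cf_inj => n; rewrite !cf_add cf0 /cf; by case: (n \in p) => //; apply/eqP. Qed.
Lemma lmulDl p q r : lmul (ladd p q) r = ladd (lmul p r) (lmul q r).
Proof. by rewrite lmulC lmulDr !(lmulC r). Qed.

From Stdlib Require Import Ring_theory Ring.

Lemma lring : ring_theory lzero lone ladd lmul ladd (fun x => x) (@eq laurent).
Proof.
constructor.
- exact: ladd0.
- exact: laddC.
- exact: laddA.
- exact: lmul1.
- exact: lmulC.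
- exact: lmulA.
- exact: lmulDl.
- by [].
- exact: laddxx.
Qed.

Definition bphi (b : bool) : laurent := if b then lone else lzero.

Lemma lmorph : ring_morph lzero lone ladd lmul ladd (fun x => x) (@eq laurent)
  false true xorb andb xorb (fun x => x) Bool.eqb bphi.
Proof.
constructor => //.
- by case; case => /=; rewrite ?laddxx ?ladd0 // laddC ladd0.
- by case; case => /=; rewrite ?laddxx ?ladd0 // laddC ladd0.
- by case; case => /=; rewrite ?lmul1 ?lmul0 // lmulC lmul0.
- by case; case.
Qed.

Ltac bcst t := match t with lzero => constr:(false) | lone => constr:(true) | _ => constr:(InitialRing.NotConstant) end.
Add Ring LRing : lring (morphism lmorph, constants [bcst]).



Lemma cf_inv p n : cf (linv_var p) n = cf p (- n).
Proof. by rewrite /cf /linv_var -{1}[n]opprK mem_imfset //; exact: oppr_inj. Qed.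

Lemma linv_mul p q : linv_var (lmul p q) = lmul (linv_var p) (linv_var q).
Proof.
apply: cf_inj => n; rewrite cf_inv !cf_mul2.
rewrite /linv_var big_imfset /=; last by move=> x y _ _; exact: oppr_inj.
apply: eq_bigr => i _; rewrite big_imfset /=; last by move=> x y _ _; exact: oppr_inj.
apply: eq_bigr => j _; rewrite (_ : (i + j == - n) = (- i + - j == n)) //.
by apply/idP/idP => /eqP H; apply/eqP; lia.
Qed.

Lemma linv_add p q : linv_var (ladd p q) = ladd (linv_var p) (linv_var q).
Proof. by apply: cf_inj => n; rewrite !(cf_inv, cf_add). Qed.

Lemma pal_mul p q : palindromic p -> palindromic q -> palindromic (lmul p q).
Proof. by rewrite /palindromic linv_mul => -> ->. Qed.
Lemma pal_add p q : palindromic p -> palindromic q -> palindromic (ladd p q).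
Proof. by rewrite /palindromic linv_add => -> ->. Qed.
Lemma pal_one : palindromic lone.
Proof. by apply: cf_inj => n; rewrite cf_inv !cf1 oppr_eq0. Qed.
Lemma pal_zero : palindromic lzero.
Proof. by apply: cf_inj => n; rewrite cf_inv !cf0. Qed.

Lemma seq_max (s : seq int) x : x \in s ->
  exists2 m, m \in s & forall k, k \in s -> k <= m.
Proof.
elim: s x => // y s IH x; rewrite inE => /orP [_|xs].
  case: s IH => [|z s] IH.
    by exists y; rewrite ?inE // => k; rewrite inE => /eqP ->.
  have [m ms Hm] := IH z (mem_head _ _).
  case: (lerP y m) => ym.
    exists m; first by rewrite inE ms orbT.
    by move=> k; rewrite inE => /orP [/eqP ->|/Hm].
  exists y; first by rewrite inE eqxx.
  move=> k; rewrite inE => /orP [/eqP ->|/Hm km] //; lia.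
have [m ms Hm] := IH x xs.
case: (lerP y m) => ym.
  exists m; first by rewrite inE ms orbT.
  by move=> k; rewrite inE => /orP [/eqP ->|/Hm].
exists y; first by rewrite inE eqxx.
move=> k; rewrite inE => /orP [/eqP ->|/Hm km] //; lia.
Qed.

Lemma seq_min (s : seq int) x : x \in s ->
  exists2 m, m \in s & forall k, k \in s -> m <= k.
Proof.
move=> xs; have : - x \in [seq - k | k <- s] by apply: map_f.
case/seq_max => m /mapP [m' m's ->] Hm; exists m' => // k ks.
have := Hm (- k) (map_f _ ks); lia.
Qed.

Lemma cf_mem p n : cf p n = 1 -> n \in p.
Proof. by rewrite /cf; case: (n \in p) => // /eqP. Qed.

Lemma extreme p q i0 j0 : i0 \in p -> j0 \in q ->
  (forall i j, i \in p -> j \in q -> i + j = i0 + j0 -> i = i0) ->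
  i0 + j0 \in lmul p q.
Proof.
move=> ip jq H; apply: cf_mem; rewrite cf_mul (bigD1_seq i0) ?fset_uniq //=.
have -> : i0 + j0 - i0 = j0 by lia.
rewrite big1_seq ?addr0 /cf ?jq // => i /andP [ni0 ip'].
case E: (i0 + j0 - i \in q) => //.
have := H i _ ip' E; rewrite (_ : i + (i0 + j0 - i) = i0 + j0); last by lia.
by move=> /(_ erefl) ei; rewrite ei eqxx in ni0.
Qed.

Lemma nonempty (p : laurent) : p <> lzero -> exists x, x \in p.
Proof.
move=> H; case/fset0Pn: (introN eqP H) => x xp; by exists x.
Qed.

Lemma lmul_neq0 p q : p <> lzero -> q <> lzero -> lmul p q <> lzero.
Proof.
move=> /nonempty [x xp] /nonempty [y yq].
have [mp mpp Hp] := seq_max xp; have [mq mqq Hq] := seq_max yq.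
have : mp + mq \in lmul p q.
  apply: extreme => // i j ip jq E.
  have := Hp i ip; have := Hq j jq; lia.
by move=> H E; rewrite E inE in H.
Qed.

Lemma unit_pal p q : palindromic p -> lmul p q = lone -> p = lone.
Proof.
move=> Pp E.
have pn : p <> lzero by move=> p0; move: E; rewrite p0 lmul0 => /fsetP/(_ 0); rewrite !inE.
have qn : q <> lzero by move=> q0; move: E; rewrite lmulC q0 lmul0 => /fsetP/(_ 0); rewrite !inE.
have [x xp] := nonempty pn; have [y yq] := nonempty qn.
have [mp mpp Hp] := seq_max xp; have [mq mqq Hq] := seq_max yq.
have [np npp Hp'] := seq_min xp; have [nq nqq Hq'] := seq_min yq.
have e1 : mp + mq = 0.
  have : mp + mq \in lmul p q.
    apply: extreme => // i j ip jq E'.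
    have := Hp i ip; have := Hq j jq; lia.
  by rewrite E inE => /eqP.
have e2 : np + nq = 0.
  have : np + nq \in lmul p q.
    apply: extreme => // i j ip jq E'.
    have := Hp' i ip; have := Hq' j jq; lia.
  by rewrite E inE => /eqP.
have all_mp : forall k, k \in p -> k = mp.
  move=> k kp; have := Hp k kp; have := Hp' k kp.
  have := Hp' mp mpp; have := Hq nq nqq; have := Hq' mq mqq; lia.
have mp0 : mp = 0.
  have : cf p (- mp) = 1 by rewrite -cf_inv Pp /cf mpp.
  move/cf_mem/all_mp; lia.
apply/fsetP => k; rewrite /lone inE; apply/idP/eqP.
  by move/all_mp ->.
by move=> ->; rewrite -mp0.
Qed.

Lemma mapply_mmul A B v : mapply (mmul A B) v = mapply A (mapply B v).
Proof. case: A B v => [a b c d] [e f g h] [x y]; rewrite /mapply /mmul /=; congr pair; ring. Qed.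

Lemma mmulA A B C : mmul A (mmul B C) = mmul (mmul A B) C.
Proof. case: A B C => [a b c d] [e f g h] [x y z w]; rewrite /mmul /=; congr LMat; ring. Qed.

Lemma mmul1 A : mmul mone A = A.
Proof. case: A => [a b c d]; rewrite /mmul /mone /=; congr LMat; ring. Qed.

Lemma mapply1 v : mapply mone v = v.
Proof. case: v => x y; rewrite /mapply /=; congr pair; ring. Qed.

Lemma mpowS a t : mpow a t.+1 = mmul a (mpow a t).
Proof. by []. Qed.

Lemma mapply_pow a s t v : mapply (mpow a (s + t)) v = mapply (mpow a s) (mapply (mpow a t) v).
Proof.
elim: s => [|s IH]; first by rewrite add0n /mpow /= mapply1.
rewrite addSn (mpowS a (s + t)) (mpowS a s) !mapply_mmul IH; reflexivity.
Qed.

Lemma mpow_add a s t : mpow a (s + t) = mmul (mpow a s) (mpow a t).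
Proof.
elim: s => [|s IH]; first by rewrite add0n /mpow /= mmul1.
rewrite addSn (mpowS a (s + t)) (mpowS a s) IH mmulA; reflexivity.
Qed.

Definition goodm (M : lmat) : Prop :=
  [/\ palindromic (m11 M), palindromic (m12 M), palindromic (m21 M),
      palindromic (m22 M) & mdet M = lone].

Lemma goodm_mul A B : goodm A -> goodm B -> goodm (mmul A B).
Proof.
case: A B => [a b c d] [e f g h] [/= pa pb pc pd da] [/= pe pf pg ph db].
split => /=; rewrite ?pal_add ?pal_mul //; try by apply: pal_add; apply: pal_mul.
move: da db; rewrite /mdet /= => da db.
transitivity (lmul (ladd (lmul a d) (lmul b c)) (ladd (lmul e h) (lmul f g))).
  ring.
by rewrite da db lmul1.
Qed.

Lemma goodm_pow a t : CSCA a -> goodm (mpow a t).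
Proof.
move=> [p1 p2 p3 p4 d]; elim: t => [|t IH].
  split; [exact: pal_one|exact: pal_zero|exact: pal_zero|exact: pal_one|].
  rewrite /mdet /mone /=; ring.
by rewrite (mpowS a t); apply: goodm_mul.
Qed.

Lemma key M j v : goodm M -> (1 <= j <= 3)%N -> of_type j v ->
  of_type j (mapply M v) -> mmul M M = mone.
Proof.
case: M => [a b c d] [/= pa pb pc pd]; rewrite /mdet /= => D.
case: j => [|[|[|[|j]]]] // _ [p pn ->] [q _]; rewrite /mapply /= => -[E1 E2].
- have H : lmul c p = lzero by rewrite -E2; ring.
  have [c0|/eqP cn] := eqVneq c lzero; last by case: (lmul_neq0 cn pn H).
  rewrite c0 in D.
  have U : lmul a d = lone by rewrite -D; ring.
  have a1 := unit_pal pa U.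
  have d1 : d = lone by rewrite -U a1; ring.
  rewrite c0 a1 d1 /mmul /mone /=; congr LMat; ring.
- have H : lmul (ladd (ladd a b) (ladd c d)) p = lzero.
    transitivity (ladd (ladd (lmul a p) (lmul b p)) (ladd (lmul c p) (lmul d p))); first ring.
    rewrite E1 E2; exact: laddxx.
  have [S0|/eqP cn] := eqVneq (ladd (ladd a b) (ladd c d)) lzero; last by case: (lmul_neq0 cn pn H).
  have ec : c = ladd (ladd a b) d.
    transitivity (ladd (ladd (ladd a b) (ladd c d)) (ladd (ladd a b) d)); first ring.
    rewrite S0; ring.
  rewrite ec in D.
  have U : lmul (ladd a b) (ladd d b) = lone by rewrite -D; ring.
  have ab1 := unit_pal (pal_add pa pb) U.
  have eb : b = ladd lone a.
    transitivity (ladd (ladd a b) a); first ring.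
    rewrite ab1; reflexivity.
  rewrite eb in D.
  have ad : ladd a d = lzero by rewrite -(laddxx lone) -{1}D; ring.
  have ed : d = a.
    transitivity (ladd (ladd a d) a); first ring.
    rewrite ad; ring.
  rewrite ec eb ed /mmul /mone /=; congr LMat; ring.
- have H : lmul b p = lzero by rewrite -E1; ring.
  have [b0|/eqP bn] := eqVneq b lzero; last by case: (lmul_neq0 bn pn H).
  rewrite b0 in D.
  have U : lmul a d = lone by rewrite -D; ring.
  have a1 := unit_pal pa U.
  have d1 : d = lone by rewrite -U a1; ring.
  rewrite b0 a1 d1 /mmul /mone /=; congr LMat; ring.
Qed.

Theorem lemmaA1 (a : lmat) (j : nat) (xi : lvec) :
  CSCA a -> ~ periodic a -> (1 <= j <= 3)%N -> xi <> vzero ->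
  forall t1 t2 : nat,
    of_type j (mapply (mpow a t1) xi) -> of_type j (mapply (mpow a t2) xi) ->
    t1 = t2.
Proof.
move=> Ca Np Hj _ t1 t2.
wlog le : t1 t2 / (t1 <= t2)%N.
  move=> W T1 T2; case: (leqP t1 t2) => h; first exact: W.
  symmetry; apply: W => //; exact: ltnW.
move=> T1 T2.
have [s es] : exists s, t2 = (s + t1)%N by exists (t2 - t1)%N; rewrite subnK.
rewrite es in T2 *.
case: s {es} T2 => [|s] T2; first by rewrite add0n.
rewrite mapply_pow in T2.
have MM := key (goodm_pow s.+1 Ca) Hj T1 T2.
exfalso; apply: Np; exists (s.+1 + s.+1)%N; split; first by [].
rewrite mpow_add MM; reflexivity.
Qed.
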